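(* Let $(G,d)$ be a group with a two-sided invariant metric, $A\le G$ a subgroup, $\langle t\rangle\cong\mathbb Z$ with metric $|m-n|$, and let $d$ also denote the Graev metric on the free product $G*\langle t\rangle$. View $G*tAt^{-1}$ as the subgroup of $G*\langle t\rangle$ generated by $G$ and $tAt^{-1}$. If $A$ is closed in $G$, then $G*tAt^{-1}$ is closed in $(G*\langle t\rangle,d)$.
   Context: Graev metric on a free product $H_1*H_2$ of groups with two-sided invariant metrics $(H_1,d_1),(H_2,d_2)$: on $H=H_1\cup H_2$ use $d_i$ on $H_i$ and $d(h_1,h_2)=d_1(h_1,e)+d_2(e,h_2)$ for $h_i\in H_i$; then $\underline d(f_1,f_2)=\inf\{\sum_i d(\alpha_1(i),\alpha_2(i)):|\alpha_1|=|\alpha_2|,\ \hat\alpha_j=f_j\}$ over words $\alpha_j$ in the alphabet $H$, where $\hat\alpha$ is the product of the letters in $H_1*H_2$. *)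

(* Defs.v *)
From Stdlib Require Import Reals ZArith List.
Import ListNotations.
Open Scope R_scope.

Record IMGroup := {
  carrier :> Type;
  gmul : carrier -> carrier -> carrier;
  ginv : carrier -> carrier;
  gone : carrier;
  gmul_assoc : forall x y z, gmul x (gmul y z) = gmul (gmul x y) z;
  gmul_1l : forall x, gmul gone x = x;
  gmul_1r : forall x, gmul x gone = x;
  gmul_Vl : forall x, gmul (ginv x) x = gone;
  gmul_Vr : forall x, gmul x (ginv x) = gone;
  gdist : carrier -> carrier -> R;
  gdist_eq0 : forall x y, gdist x y = 0 <-> x = y;
  gdist_sym : forall x y, gdist x y = gdist y x;
  gdist_tri : forall x y z, gdist x z <= gdist x y + gdist y z;
  gdist_linv : forall z x y, gdist (gmul z x) (gmul z y) = gdist x y;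
  gdist_rinv : forall z x y, gdist (gmul x z) (gmul y z) = gdist x y
}.

(* Letters of the free product G * <t>: inl g is g in G, inr n is t^n. *)
Definition letter (G : IMGroup) : Type := (carrier G + Z)%type.
Definition word (G : IMGroup) : Type := list (letter G).

(* The metric on the alphabet H = G u <t> (identity shared, cf. context). *)
Definition letter_dist (G : IMGroup) (x y : letter G) : R :=
  match x, y with
  | inl g, inl h => gdist G g h
  | inr m, inr n => Rabs (IZR (m - n))
  | inl g, inr n => gdist G g (gone G) + Rabs (IZR n)
  | inr m, inl h => Rabs (IZR m) + gdist G (gone G) h
  end.

Definition word_dist (G : IMGroup) (a b : word G) : R :=
  fold_right Rplus 0 (map (fun p => letter_dist G (fst p) (snd p)) (combine a b)).

Inductive word_step (G : IMGroup) : word G -> word G -> Prop :=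
  | ws_del1 : forall u v, word_step G (u ++ inl (gone G) :: v) (u ++ v)
  | ws_del2 : forall u v, word_step G (u ++ inr 0%Z :: v) (u ++ v)
  | ws_mul1 : forall u v g h,
      word_step G (u ++ inl g :: inl h :: v) (u ++ inl (gmul G g h) :: v)
  | ws_mul2 : forall u v m n,
      word_step G (u ++ inr m :: inr n :: v) (u ++ inr (m + n)%Z :: v).

(* hat a = hat b in G * <t>: equivalence closure of the elementary moves. *)
Inductive word_equiv (G : IMGroup) : word G -> word G -> Prop :=
  | we_refl : forall a, word_equiv G a a
  | we_step : forall a b, word_step G a b -> word_equiv G a b
  | we_sym : forall a b, word_equiv G a b -> word_equiv G b a
  | we_trans : forall a b c, word_equiv G a b -> word_equiv G b c -> word_equiv G a c.

(* Graev distance of (the elements represented by) w1, w2 is < eps: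
   the infimum over same-length representatives is below eps. *)
Definition graev_lt (G : IMGroup) (w1 w2 : word G) (eps : R) : Prop :=
  exists a1 a2 : word G,
    length a1 = length a2 /\ word_equiv G a1 w1 /\ word_equiv G a2 w2 /\
    word_dist G a1 a2 < eps.

Definition gen_word (G : IMGroup) (A : carrier G -> Prop) (x : word G) : Prop :=
  (exists g, x = [inl g]) \/
  (exists a, A a /\ x = [inr 1%Z; inl a; inr (-1)%Z]).

(* Membership in the subgroup of G * <t> generated by G and tAt^{-1}
   (generating set is closed under inverses, so finite products suffice). *)
Definition in_GtAt (G : IMGroup) (A : carrier G -> Prop) (w : word G) : Prop :=
  exists ws : list (word G), Forall (gen_word G A) ws /\ word_equiv G w (concat ws).

Definition is_subgroup (G : IMGroup) (A : carrier G -> Prop) : Prop :=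
  A (gone G) /\ (forall x y, A x -> A y -> A (gmul G x y)) /\
  (forall x, A x -> A (ginv G x)).

Definition closed_in (G : IMGroup) (A : carrier G -> Prop) : Prop :=
  forall g, (forall eps, 0 < eps -> exists a, A a /\ gdist G g a < eps) -> A g.

(* Closedness of a (representative-saturated) set of words in the Graev metric. *)
Definition graev_closed (G : IMGroup) (S : word G -> Prop) : Prop :=
  forall w, (forall eps, 0 < eps -> exists h, S h /\ graev_lt G w h eps) -> S w.

(* Main.v *)
Require Import Defs.
From Stdlib Require Import Reals ZArith List.
Open Scope R_scope.
From Stdlib Require Import Lra Lia Classical.
Import ListNotations.


Definition ent (G : IMGroup) := (Z * carrier G)%type.

Lemma d_nonneg (G : IMGroup) (x y : G) : 0 <= gdist G x y.
Proof.
  pose proof (gdist_tri G x y x) as H. rewrite (gdist_sym G y x) in H.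
  assert (gdist G x x = 0) by (apply gdist_eq0; reflexivity). lra.
Qed.

Lemma d_refl (G : IMGroup) (x : G) : gdist G x x = 0.
Proof. apply gdist_eq0; reflexivity. Qed.

Lemma d_mul (G : IMGroup) (x y x' y' : G) :
  gdist G (gmul G x y) (gmul G x' y') <= gdist G x x' + gdist G y y'.
Proof.
  pose proof (gdist_tri G (gmul G x y) (gmul G x' y) (gmul G x' y')) as H.
  rewrite gdist_rinv, gdist_linv in H. exact H.
Qed.

Definition AS (G : IMGroup) (A : carrier G -> Prop) (n : Z) (g : G) : Prop :=
  n = 0%Z \/ (n = 1%Z /\ A g) \/ g = gone G.

Lemma AS_mul (G : IMGroup) A n x y : is_subgroup G A -> AS G A n x -> AS G A n y -> AS G A n (gmul G x y).
Proof.
  intros [H1 [H2 H3]] [?|[[? ?]|?]] [?|[[? ?]|?]]; unfold AS; subst; auto;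
  try rewrite gmul_1l; try rewrite gmul_1r; auto.
  all: try (right; left; split; auto; fail).
  all: try (rewrite gmul_1l; auto).
Qed.

Inductive FC (G : IMGroup) (A : carrier G -> Prop) : list (ent G) -> R -> Prop :=
| FC_nil : forall c, 0 <= c -> FC G A [] c
| FC_cons : forall n g a L c, AS G A n a -> FC G A L (c - gdist G g a) -> FC G A ((n,g)::L) c.

Inductive Rd (G : IMGroup) (A : carrier G -> Prop) : list (ent G) -> R -> Prop :=
| Rd_fin : forall L c, FC G A L c -> Rd G A L c
| Rd_merge : forall u v n x y c, Rd G A (u ++ (n, gmul G x y) :: v) c ->
    Rd G A (u ++ (n,x)::(n,y)::v) c
| Rd_del : forall u v n x c, Rd G A (u ++ v) (c - gdist G x (gone G)) ->
    Rd G A (u ++ (n,x)::v) c.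

Inductive Pert (G : IMGroup) : list (ent G) -> list (ent G) -> R -> Prop :=
| Pert_nil : forall p, 0 <= p -> Pert G [] [] p
| Pert_cons : forall n x y L L' p, Pert G L L' (p - gdist G x y) ->
    Pert G ((n,x)::L) ((n,y)::L') p.

Inductive LS (G : IMGroup) : list (ent G) -> list (ent G) -> Prop :=
| LS_merge : forall u v n x y, LS G (u ++ (n,x)::(n,y)::v) (u ++ (n, gmul G x y)::v)
| LS_del : forall u v n, LS G (u ++ (n, gone G)::v) (u ++ v).

Lemma FC_nonneg G A L c : FC G A L c -> 0 <= c.
Proof. induction 1; auto. pose proof (d_nonneg G g a); lra. Qed.

Lemma FC_mono G A L c : FC G A L c -> forall c', c <= c' -> FC G A L c'.
Proof.
  induction 1; intros c' Hc.
  - constructor; lra.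
  - econstructor; eauto. apply IHFC; lra.
Qed.

Lemma Rd_nonneg G A L c : Rd G A L c -> 0 <= c.
Proof. induction 1; eauto using FC_nonneg. pose proof (d_nonneg G x (gone G)); lra. Qed.

Lemma Rd_mono G A L c : Rd G A L c -> forall c', c <= c' -> Rd G A L c'.
Proof.
  induction 1; intros c' Hc.
  - constructor. eapply FC_mono; eauto.
  - apply Rd_merge; auto.
  - apply Rd_del; apply IHRd; lra.
Qed.

Lemma FC_app G A u v c1 c2 : FC G A u c1 -> FC G A v c2 -> FC G A (u ++ v) (c1 + c2).
Proof.
  induction 1; intros Hv; simpl.
  - eapply FC_mono; eauto. lra.
  - econstructor; eauto. replace (c + c2 - gdist G g a) with (c - gdist G g a + c2) by ring. auto.
Qed.

Lemma FC_split G A u v c : FC G A (u ++ v) c -> exists c1, FC G A u c1 /\ FC G A v (c - c1).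
Proof.
  revert c; induction u as [|[n g] u IH]; intros c H; simpl in *.
  - exists 0. split. constructor; lra. replace (c - 0) with c by ring; auto.
  - inversion H as [|? ? a ? ? Ha Hr]; subst. destruct (IH _ Hr) as [c1 [H1 H2]].
    exists (gdist G g a + c1). split.
    + econstructor; eauto. replace (gdist G g a + c1 - gdist G g a) with c1 by ring; auto.
    + replace (c - (gdist G g a + c1)) with (c - gdist G g a - c1) by ring; auto.
Qed.

Lemma Pert_mono G L L' p : Pert G L L' p -> forall p', p <= p' -> Pert G L L' p'.
Proof.
  induction 1; intros p' Hp; constructor; try lra. apply IHPert; lra.
Qed.

Lemma Pert_nonneg G L L' p : Pert G L L' p -> 0 <= p.
Proof. induction 1; auto. pose proof (d_nonneg G x y); lra. Qed.

Lemma Pert_app G u u' v v' p1 p2 : Pert G u u' p1 -> Pert G v v' p2 -> Pert G (u ++ v) (u' ++ v') (p1 + p2).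
Proof.
  induction 1; intros Hv; simpl.
  - eapply Pert_mono; eauto; lra.
  - constructor. replace (p + p2 - gdist G x y) with (p - gdist G x y + p2) by ring; auto.
Qed.

Lemma Pert_split G u v L p : Pert G (u ++ v) L p ->
  exists u' v' p1, L = u' ++ v' /\ Pert G u u' p1 /\ Pert G v v' (p - p1).
Proof.
  revert L p; induction u as [|[n g] u IH]; intros L p H; simpl in *.
  - exists [], L, 0. split; auto. split. constructor; lra. replace (p - 0) with p by ring; auto.
  - inversion H as [|? ? y ? L' ? Hr]; subst. destruct (IH _ _ Hr) as [u' [v' [p1 [-> [H1 H2]]]]].
    exists ((n,y)::u'), v', (gdist G g y + p1). split; auto. split.
    + constructor. replace (gdist G g y + p1 - gdist G g y) with p1 by ring; auto.
    + replace (p - (gdist G g y + p1)) with (p - gdist G g y - p1) by ring; auto.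
Qed.

Lemma Pert_refl G L : Pert G L L 0.
Proof.
  induction L as [|[n g] L IH]; constructor. lra. rewrite d_refl. replace (0-0) with 0 by ring; auto.
Qed.

Lemma Pert_sym G L L' p : Pert G L L' p -> Pert G L' L p.
Proof. induction 1; constructor; auto. rewrite gdist_sym; auto. Qed.

Lemma FC_pert G A L c : FC G A L c -> forall L' p, Pert G L L' p -> FC G A L' (c + p).
Proof.
  induction 1; intros L' p HP; inversion HP as [|? ? y ? L'' ? Hr]; subst.
  - constructor. lra.
  - econstructor; eauto. eapply FC_mono. apply (IHFC _ _ Hr).
    pose proof (gdist_tri G y g a). rewrite (gdist_sym G y g) in H1. lra.
Qed.

Lemma Rd_pert G A L c : Rd G A L c -> forall L' p, Pert G L L' p -> Rd G A L' (c + p).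
Proof.
  induction 1; intros L' p HP.
  - constructor. eapply FC_pert; eauto.
  - destruct (Pert_split _ _ _ _ _ HP) as [u' [w' [p1 [-> [H1 H2]]]]].
    inversion H2 as [|? ? x' ? L1 ? Hr1]; subst. inversion Hr1 as [|? ? y' ? L2 ? Hr2]; subst. apply Rd_merge.
    pose proof (d_mul G x y x' y').
    eapply Rd_mono. apply IHRd.
    apply (Pert_app _ _ _ _ _ _ _ H1 (Pert_cons _ n (gmul G x y) (gmul G x' y') _ _ (p - p1)
       (Pert_mono _ _ _ _ Hr2 (p - p1 - gdist G (gmul G x y) (gmul G x' y')) ltac:(lra)))).
    lra.
  - destruct (Pert_split _ _ _ _ _ HP) as [u' [w' [p1 [-> [H1 H2]]]]].
    inversion H2 as [|? ? y ? L1 ? Hr1]; subst. apply Rd_del.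
    eapply Rd_mono. apply IHRd. apply (Pert_app _ _ _ _ _ _ _ H1 Hr1).
    pose proof (gdist_tri G y x (gone G)) as T. rewrite (gdist_sym G y x) in T. lra.
Qed.

Lemma app_cons_eq {T} (u v u' v' : list T) a a' :
  u ++ a :: v = u' ++ a' :: v' ->
  (u = u' /\ a = a' /\ v = v') \/
  (exists m, u' = u ++ a :: m /\ v = m ++ a' :: v') \/
  (exists m, u = u' ++ a' :: m /\ v' = m ++ a :: v).
Proof.
  revert u'; induction u as [|b u IH]; intros u' H; destruct u' as [|b' u']; simpl in *.
  - inversion H; subst; auto.
  - inversion H; subst. right; left. exists u'; auto.
  - inversion H; subst. right; right. exists u; auto.
  - inversion H as [[Hb Hr]]; subst. destruct (IH _ Hr) as [[-> [-> ->]]|[[m [-> ->]]|[m [-> ->]]]].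
    + left; auto.
    + right; left; exists m; auto.
    + right; right; exists m; auto.
Qed.

Lemma LS_merge' G u v n x y L1 L2 : L1 = u ++ (n,x)::(n,y)::v -> L2 = u ++ (n, gmul G x y)::v -> LS G L1 L2.
Proof. intros -> ->; constructor. Qed.
Lemma LS_del' G u v n L1 L2 : L1 = u ++ (n, gone G)::v -> L2 = u ++ v -> LS G L1 L2.
Proof. intros -> ->; constructor. Qed.

Lemma Rd_merge' G A u v n x y c L : Rd G A (u ++ (n, gmul G x y) :: v) c -> L = u ++ (n,x)::(n,y)::v -> Rd G A L c.
Proof. intros H ->; apply Rd_merge; auto. Qed.
Lemma Rd_del' G A u v n x c L : Rd G A (u ++ v) (c - gdist G x (gone G)) -> L = u ++ (n,x)::v -> Rd G A L c.
Proof. intros H ->; apply Rd_del; auto. Qed.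

Ltac nlin H := repeat (rewrite <- app_assoc in H; simpl in H).
Ltac nl := repeat (rewrite <- app_assoc; simpl).

Lemma Rd_LS_back G A L1 L2 c : LS G L1 L2 -> Rd G A L2 c -> Rd G A L1 c.
Proof.
  intros [u v n x y|u v n] H.
  - apply Rd_merge; auto.
  - apply Rd_del. rewrite d_refl. eapply Rd_mono; eauto; lra.
Qed.

Lemma Rd_LS_fwd G A (HA : is_subgroup G A) L1 c : Rd G A L1 c -> forall L2, LS G L1 L2 -> Rd G A L2 c.
Proof.
  induction 1 as [L c HF|u v n x y c H IH|u v n x c H IH]; intros L2 HS.
  - constructor. destruct HS as [u v n x y|u v n].
    + destruct (FC_split _ _ _ _ _ HF) as [c1 [H1 H2]].
      inversion H2 as [|? ? a1 ? ? Ha1 Hr1]; subst.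
      inversion Hr1 as [|? ? a2 ? ? Ha2 Hr2]; subst.
      replace c with (c1 + (c - c1)) by ring. apply FC_app; auto.
      apply FC_cons with (a := gmul G a1 a2). apply AS_mul; auto.
      eapply FC_mono; eauto. pose proof (d_mul G x y a1 a2). lra.
    + destruct (FC_split _ _ _ _ _ HF) as [c1 [H1 H2]].
      inversion H2 as [|? ? a1 ? ? Ha1 Hr1]; subst.
      eapply FC_mono. apply FC_app; eauto. pose proof (d_nonneg G (gone G) a1). lra.
  - remember (u ++ (n, x) :: (n, y) :: v) as L1 eqn:H0. destruct HS as [u' v' n' x' y'|u' v' n']; symmetry in H0.
    + destruct (app_cons_eq _ _ _ _ _ _ H0) as [[-> [E1 E2]]|[[m [-> E2]]|[m [-> E2]]]].
      * inversion E1; subst. inversion E2; subst. auto.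
      * destruct m as [|b m]; simpl in E2; inversion E2; subst.
        -- assert (HH : Rd G A (u ++ (n', gmul G (gmul G x x') y') :: v') c).
           { apply IH. eapply (LS_merge' _ u); nl; reflexivity. }
           nl. apply Rd_merge. rewrite gmul_assoc. auto.
        -- assert (HH : Rd G A ((u ++ (n, gmul G x y) :: m) ++ (n', gmul G x' y') :: v') c).
           { apply IH. eapply (LS_merge' _ (u ++ (n, gmul G x y) :: m)); nl; reflexivity. }
           nl. apply Rd_merge. nl. nlin HH. auto.
      * destruct m as [|b m]; simpl in E2; inversion E2; subst.
        -- assert (HH : Rd G A (u' ++ (n, gmul G x' (gmul G x y)) :: v) c).
           { apply IH. eapply (LS_merge' _ u'); nl; reflexivity. }
           nl. apply Rd_merge. rewrite <- gmul_assoc. auto.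
        -- assert (HH : Rd G A (u' ++ (n', gmul G x' y') :: m ++ (n, gmul G x y) :: v) c).
           { apply IH. eapply (LS_merge' _ u'); nl; reflexivity. }
           eapply (Rd_merge' _ _ (u' ++ (n', gmul G x' y') :: m)); [nl; exact HH| nl; reflexivity].
    + destruct (app_cons_eq _ _ _ _ _ _ H0) as [[-> [E1 E2]]|[[m [-> E2]]|[m [-> E2]]]].
      * inversion E1; subst. rewrite gmul_1l in H. auto.
      * destruct m as [|b m]; simpl in E2; inversion E2; subst.
        -- rewrite gmul_1r in H. nl. auto.
        -- assert (HH : Rd G A ((u ++ (n, gmul G x y) :: m) ++ v') c).
           { apply IH. eapply (LS_del' _ (u ++ (n, gmul G x y) :: m)); nl; reflexivity. }
           nl. apply Rd_merge. nl. nlin HH. auto.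
      * subst. assert (HH : Rd G A ((u' ++ m) ++ (n, gmul G x y) :: v) c).
        { apply IH. eapply (LS_del' _ u'); nl; reflexivity. }
        eapply (Rd_merge' _ _ (u' ++ m)); [exact HH| nl; reflexivity].
  - remember (u ++ (n, x) :: v) as L1 eqn:H0. destruct HS as [u' v' n' x' y'|u' v' n']; symmetry in H0.
    + destruct (app_cons_eq _ _ _ _ _ _ H0) as [[-> [E1 E2]]|[[m [-> E2]]|[m [-> E2]]]].
      * inversion E1; subst.
        assert (HP : Pert G (u' ++ (n', y') :: v') (u' ++ (n', gmul G x' y') :: v') (gdist G x' (gone G))).
        { replace (gdist G x' (gone G)) with (0 + gdist G x' (gone G)) by ring.
          apply Pert_app. apply Pert_refl. constructor.
          replace (gdist G y' (gmul G x' y')) with (gdist G x' (gone G)).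
          replace (gdist G x' (gone G) - gdist G x' (gone G)) with 0 by ring. apply Pert_refl.
          rewrite <- (gmul_1l G y') at 1. rewrite gdist_rinv. apply gdist_sym. }
        pose proof (Rd_pert _ _ _ _ H _ _ HP). eapply Rd_mono; eauto. lra.
      * subst. assert (HH : Rd G A ((u ++ m) ++ (n', gmul G x' y') :: v') (c - gdist G x (gone G))).
        { apply IH. eapply (LS_merge' _ (u ++ m)); nl; reflexivity. }
        nl. apply Rd_del. nl. nlin HH. auto.
      * destruct m as [|b m]; simpl in E2; inversion E2; subst.
        -- assert (HP : Pert G (u' ++ (n, x') :: v) (u' ++ (n, gmul G x' x) :: v) (gdist G x (gone G))).
           { replace (gdist G x (gone G)) with (0 + gdist G x (gone G)) by ring.
             apply Pert_app. apply Pert_refl. constructor.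
             replace (gdist G x' (gmul G x' x)) with (gdist G x (gone G)).
             replace (gdist G x (gone G) - gdist G x (gone G)) with 0 by ring. apply Pert_refl.
             rewrite <- (gmul_1r G x') at 1. rewrite gdist_linv. apply gdist_sym. }
           nlin H. pose proof (Rd_pert _ _ _ _ H _ _ HP). eapply Rd_mono; eauto. lra.
        -- assert (HH : Rd G A (u' ++ (n', gmul G x' y') :: m ++ v) (c - gdist G x (gone G))).
           { apply IH. eapply (LS_merge' _ u'); nl; reflexivity. }
           eapply (Rd_del' _ _ (u' ++ (n', gmul G x' y') :: m)); [nl; exact HH| nl; reflexivity].

    + destruct (app_cons_eq _ _ _ _ _ _ H0) as [[-> [E1 E2]]|[[m [-> E2]]|[m [-> E2]]]].
      * inversion E1; subst. rewrite d_refl in H. eapply Rd_mono; eauto. lra.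
      * subst. assert (HH : Rd G A ((u ++ m) ++ v') (c - gdist G x (gone G))).
        { apply IH. eapply (LS_del' _ (u ++ m)); nl; reflexivity. }
        nl. apply Rd_del. nl. nlin HH. auto.
      * subst. assert (HH : Rd G A (u' ++ m ++ v) (c - gdist G x (gone G))).
        { apply IH. eapply (LS_del' _ u'); nl; reflexivity. }
        eapply (Rd_del' _ _ (u' ++ m)); [nl; exact HH| nl; reflexivity].
Qed.

Fixpoint succ (G : IMGroup) (L : list (ent G)) : list (list (ent G) * R) :=
  match L with
  | [] => []
  | (n,x) :: r =>
    (r, gdist G x (gone G)) ::
    (match r with
     | (n',y)::r' => if Z.eq_dec n n' then [((n, gmul G x y)::r', 0)] else []
     | [] => [] end) ++
    map (fun p => ((n,x) :: fst p, snd p)) (succ G r)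
  end.

Lemma succ_merge G u v n x y : In (u ++ (n, gmul G x y)::v, 0) (succ G (u ++ (n,x)::(n,y)::v)).
Proof.
  induction u as [|[m z] u IH]; simpl.
  - right. destruct (Z.eq_dec n n); [|congruence]. simpl; auto.
  - right. apply in_or_app. right.
    change ((m,z) :: u ++ (n, gmul G x y) :: v, 0) with
      ((fun p : list (ent G) * R => ((m,z) :: fst p, snd p)) (u ++ (n, gmul G x y) :: v, 0)).
    apply in_map. auto.
Qed.

Lemma succ_del G u v n x : In (u ++ v, gdist G x (gone G)) (succ G (u ++ (n,x)::v)).
Proof.
  induction u as [|[m z] u IH]; simpl.
  - left; auto.
  - right. apply in_or_app. right.
    change ((m,z) :: u ++ v, gdist G x (gone G)) with
      ((fun p : list (ent G) * R => ((m,z) :: fst p, snd p)) (u ++ v, gdist G x (gone G))).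
    apply in_map. auto.
Qed.

Lemma succ_prop G (L : list (ent G)) p : In p (succ G L) ->
  (length (fst p) < length L)%nat /\ 0 <= snd p /\
  (forall A u c, Rd G A (u ++ fst p) c -> Rd G A (u ++ L) (c + snd p)).
Proof.
  revert p; induction L as [|[n x] r IH]; intros p Hp; simpl in Hp; [contradiction|].
  destruct Hp as [<-|Hp].
  - simpl. split; [lia|]. split; [apply d_nonneg|].
    intros A u c H. apply Rd_del. replace (c + gdist G x (gone G) - gdist G x (gone G)) with c by ring. auto.
  - apply in_app_or in Hp. destruct Hp as [Hp|Hp].
    + destruct r as [|[n' y] r']; [contradiction|].
      destruct (Z.eq_dec n n') as [<-|]; [|contradiction].
      destruct Hp as [<-|[]]. simpl. split; [lia|]. split; [lra|].
      intros A u c H. apply Rd_merge. replace (c + 0) with c by ring. auto.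
    + apply in_map_iff in Hp. destruct Hp as [q [<- Hq]].
      destruct (IH q Hq) as [H1 [H2 H3]]. simpl. split; [apply -> Nat.succ_lt_mono; exact H1|]. split; auto.
      intros A u c H. specialize (H3 A (u ++ [(n,x)]) c).
      rewrite <- !app_assoc in H3. simpl in H3. auto.
Qed.

Lemma Rd_inv G A L c : Rd G A L c -> FC G A L c \/ exists p, In p (succ G L) /\ Rd G A (fst p) (c - snd p).
Proof.
  intros H; destruct H as [L c HF|u v n x y c H|u v n x c H].
  - left; auto.
  - right. eexists. split. apply succ_merge. simpl. replace (c - 0) with c by ring; auto.
  - right. eexists. split. apply succ_del. simpl. auto.
Qed.

Lemma AS_closed G A n g : is_subgroup G A -> closed_in G A -> ~ AS G A n g ->
  exists t, 0 < t /\ forall a, AS G A n a -> t <= gdist G g a.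
Proof.
  intros [H1 [H2 H3]] Hc Hn. apply NNPP. intros Hno.
  assert (Hall : forall t, 0 < t -> exists a, AS G A n a /\ gdist G g a < t).
  { intros t Ht. apply NNPP. intros Hx. apply Hno. exists t. split; auto.
    intros a Ha. apply Rnot_lt_le. intros Hlt. apply Hx. eauto. }
  apply Hn. unfold AS.
  destruct (Z.eq_dec n 0) as [|H0]; [left; auto|].
  destruct (Z.eq_dec n 1) as [->|H1'].
  - right; left; split; auto. apply Hc. intros eps He.
    destruct (Hall eps He) as [a [[Ha|[[_ Ha]|Ha]] Hd]]; [lia| |]; exists a; split; auto.
    subst; auto.
  - right; right. apply gdist_eq0. apply Rle_antisym; [|apply d_nonneg].
    apply Rnot_lt_le. intros Hlt.
    destruct (Hall _ Hlt) as [a [[Ha|[[Ha _]|Ha]] Hd]]; try lia. subst. lra.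
Qed.

Lemma FC_exact G A L : FC G A L 0 <-> Forall (fun p => AS G A (fst p) (snd p)) L.
Proof.
  split.
  - assert (forall c, FC G A L c -> c <= 0 -> Forall (fun p => AS G A (fst p) (snd p)) L); [|eauto with real].
    intros c H; induction H as [c Hc|n g a L c Ha H IH]; intros Hc0; constructor.
    + pose proof (FC_nonneg _ _ _ _ H). pose proof (d_nonneg G g a).
      assert (gdist G g a = 0) as E by lra. apply gdist_eq0 in E. subst; auto.
    + apply IH. pose proof (d_nonneg G g a). lra.
  - induction 1 as [|[n g] L Ha HL IH]. constructor; lra.
    apply FC_cons with (a := g); auto. rewrite d_refl. replace (0-0) with 0 by ring; auto.
Qed.

Lemma FC_thresh G A L : is_subgroup G A -> closed_in G A -> ~ FC G A L 0 ->
  exists t, 0 < t /\ forall c, c < t -> ~ FC G A L c.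
Proof.
  intros HS HC. induction L as [|[n g] r IH]; intros Hn.
  - exfalso; apply Hn; constructor; lra.
  - destruct (classic (AS G A n g)) as [Ha|Ha].
    + assert (Hr : ~ FC G A r 0).
      { intros Hr. apply Hn. apply FC_cons with (a := g); auto. rewrite d_refl.
        replace (0-0) with 0 by ring; auto. }
      destruct (IH Hr) as [t [Ht Hf]]. exists t; split; auto.
      intros c Hc HF. inversion HF as [|? ? a ? ? Ha' Hr']; subst.
      apply (Hf (c - gdist G g a)); auto. pose proof (d_nonneg G g a); lra.
    + destruct (AS_closed _ _ _ _ HS HC Ha) as [t [Ht Hf]]. exists t; split; auto.
      intros c Hc HF. inversion HF as [|? ? a ? ? Ha' Hr']; subst.
      apply FC_nonneg in Hr'. specialize (Hf a Ha'). lra.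
Qed.

Lemma list_min {X} (l : list X) (P : X -> R -> Prop) :
  (forall x, In x l -> exists t, 0 < t /\ forall c, c < t -> ~ P x c) ->
  exists t, 0 < t /\ forall x c, In x l -> c < t -> ~ P x c.
Proof.
  induction l as [|a l IH]; intros H.
  - exists 1; split; [lra|]. intros x c [].
  - destruct (H a (or_introl eq_refl)) as [t1 [Ht1 H1]].
    destruct IH as [t2 [Ht2 H2]]. { intros x Hx; apply H; right; auto. }
    exists (Rmin t1 t2). split. apply Rmin_glb_lt; auto.
    intros x c [<-|Hx] Hc.
    + apply H1. pose proof (Rmin_l t1 t2); lra.
    + apply H2; auto. pose proof (Rmin_r t1 t2); lra.
Qed.

Lemma Rd_thresh G A : is_subgroup G A -> closed_in G A -> forall N (L : list (ent G)),
  (length L <= N)%nat -> ~ Rd G A L 0 -> exists t, 0 < t /\ forall c, c < t -> ~ Rd G A L c.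
Proof.
  intros HS HC N. induction N as [|N IHN]; intros L HL Hn.
  - destruct L; [|simpl in HL; lia]. exfalso. apply Hn. constructor. constructor. lra.
  - assert (HF : ~ FC G A L 0) by (intros HF; apply Hn; constructor; auto).
    destruct (FC_thresh _ _ _ HS HC HF) as [t1 [Ht1 Hf1]].
    destruct (list_min (succ G L) (fun p c => Rd G A (fst p) (c - snd p))) as [t2 [Ht2 Hf2]].
    { intros p Hp. destruct (succ_prop _ _ _ Hp) as [Hlen [Hnn Hlift]].
      destruct (classic (Rd G A (fst p) 0)) as [H0|H0].
      - destruct (Req_dec (snd p) 0) as [E|E].
        + exfalso. apply Hn. specialize (Hlift A [] 0 H0). simpl in Hlift. rewrite E in Hlift.
          replace (0+0) with 0 in Hlift by ring. auto.
        + exists (snd p). split; [lra|]. intros c Hc HR. apply Rd_nonneg in HR. lra.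
      - destruct (IHN (fst p) ltac:(lia) H0) as [t [Ht Hf]].
        exists t. split; auto. intros c Hc. apply Hf. lra. }
    exists (Rmin t1 t2). split. apply Rmin_glb_lt; auto.
    intros c Hc HR. destruct (Rd_inv _ _ _ _ HR) as [HF'|[p [Hp HR']]].
    + apply (Hf1 c); auto. pose proof (Rmin_l t1 t2); lra.
    + apply (Hf2 p c); auto. pose proof (Rmin_r t1 t2); lra.
Qed.

Lemma Rd_closed G A L : is_subgroup G A -> closed_in G A ->
  (forall eps, 0 < eps -> Rd G A L eps) -> Rd G A L 0.
Proof.
  intros HS HC H. apply NNPP. intros Hn.
  destruct (Rd_thresh _ _ HS HC (length L) L (le_n _) Hn) as [t [Ht Hf]].
  apply (Hf (t/2)); [lra|]. apply H; lra.
Qed.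

Fixpoint tsum (G : IMGroup) (a : word G) : Z :=
  match a with
  | [] => 0%Z
  | inl _ :: r => tsum G r
  | inr m :: r => (m + tsum G r)%Z
  end.

Fixpoint hs (G : IMGroup) (h : Z) (a : word G) : list (ent G) :=
  match a with
  | [] => []
  | inl g :: r => (h, g) :: hs G h r
  | inr m :: r => if Z.eq_dec m 0 then (h, gone G) :: hs G h r else hs G (h + m)%Z r
  end.

Lemma tsum_app G u v : tsum G (u ++ v) = (tsum G u + tsum G v)%Z.
Proof. induction u as [|[g|m] u IH]; simpl; auto; lia. Qed.

Lemma hs_app G h u v : hs G h (u ++ v) = hs G h u ++ hs G (h + tsum G u)%Z v.
Proof.
  revert h; induction u as [|[g|m] u IH]; intros h; simpl.
  - rewrite Z.add_0_r; auto.
  - rewrite IH; auto.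
  - destruct (Z.eq_dec m 0) as [->|Hm]; simpl; rewrite IH; auto.
    replace (h + m + tsum G u)%Z with (h + (m + tsum G u))%Z by lia; auto.
Qed.

Lemma step_tsum G a b : word_step G a b -> tsum G a = tsum G b.
Proof. intros []; rewrite !tsum_app; simpl; lia. Qed.

Lemma step_hs G a b h : word_step G a b ->
  hs G h a = hs G h b \/ LS G (hs G h a) (hs G h b) \/ LS G (hs G h b) (hs G h a).
Proof.
  intros [u v|u v|u v g k|u v m n]; rewrite !hs_app; simpl.
  - right; left. apply LS_del.
  - destruct (Z.eq_dec 0 0); [|congruence]. right; left. apply LS_del.
  - right; left. apply LS_merge.
  - set (h' := (h + tsum G u)%Z).
    destruct (Z.eq_dec m 0) as [->|Hm].
    + simpl. right; left. apply LS_del.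
    + destruct (Z.eq_dec n 0) as [->|Hn].
      * rewrite Z.add_0_r. destruct (Z.eq_dec m 0); [congruence|].
        right; left. apply LS_del.
      * destruct (Z.eq_dec (m + n) 0) as [E|E].
        -- replace (h' + m + n)%Z with h' by lia. right; right. apply LS_del.
        -- left. replace (h' + m + n)%Z with (h' + (m + n))%Z by lia. reflexivity.
Qed.

Lemma Rd_equiv G A (HA : is_subgroup G A) a b : word_equiv G a b ->
  forall h c, Rd G A (hs G h a) c <-> Rd G A (hs G h b) c.
Proof.
  induction 1 as [a|a b H|a b H IH|a b c' H1 IH1 H2 IH2]; intros h c.
  - tauto.
  - destruct (step_hs _ _ _ h H) as [E|[E|E]].
    + rewrite E; tauto.
    + split; intros; [eapply Rd_LS_fwd|eapply Rd_LS_back]; eauto.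
    + split; intros; [eapply Rd_LS_back|eapply Rd_LS_fwd]; eauto.
  - rewrite IH; tauto.
  - rewrite IH1; auto.
Qed.

Lemma tsum_equiv G a b : word_equiv G a b -> tsum G a = tsum G b.
Proof.
  induction 1; auto. apply step_tsum; auto. congruence.
Qed.

Lemma step_ctx G u v a b : word_step G a b -> word_step G (u ++ a ++ v) (u ++ b ++ v).
Proof.
  intros [u0 v0|u0 v0|u0 v0 g k|u0 v0 m n];
  rewrite !app_assoc; rewrite <- !(app_assoc (u ++ u0)); simpl; constructor.
Qed.

Lemma equiv_ctx G u v a b : word_equiv G a b -> word_equiv G (u ++ a ++ v) (u ++ b ++ v).
Proof.
  induction 1.
  - constructor.
  - apply we_step; apply step_ctx; auto.
  - apply we_sym; auto.
  - eapply we_trans; eauto.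
Qed.

Lemma E_step G u v a b : word_step G a b -> word_equiv G (u ++ a ++ v) (u ++ b ++ v).
Proof. intros; apply we_step, step_ctx; auto. Qed.

Lemma E_del0 G u v : word_equiv G (u ++ inr 0%Z :: v) (u ++ v).
Proof. apply we_step. apply (ws_del2 G u v). Qed.
Lemma E_dele G u v : word_equiv G (u ++ inl (gone G) :: v) (u ++ v).
Proof. apply we_step. apply (ws_del1 G u v). Qed.
Lemma E_mul1 G u v g k : word_equiv G (u ++ inl g :: inl k :: v) (u ++ inl (gmul G g k) :: v).
Proof. apply we_step. apply ws_mul1. Qed.
Lemma E_mul2 G u v m n : word_equiv G (u ++ inr m :: inr n :: v) (u ++ inr (m+n)%Z :: v).
Proof. apply we_step. apply ws_mul2. Qed.
Lemma E_cons G x a b : word_equiv G a b -> word_equiv G (x :: a) (x :: b).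
Proof. intros H. pose proof (equiv_ctx G [x] [] a b H). rewrite !app_nil_r in H0. auto. Qed.
Lemma E_app G u a b : word_equiv G a b -> word_equiv G (u ++ a) (u ++ b).
Proof. intros H. pose proof (equiv_ctx G u [] a b H). rewrite !app_nil_r in H0. auto. Qed.
Lemma E_appr G v a b : word_equiv G a b -> word_equiv G (a ++ v) (b ++ v).
Proof. intros H. pose proof (equiv_ctx G [] v a b H). auto. Qed.

Fixpoint unhs (G : IMGroup) (h : Z) (L : list (ent G)) : word G :=
  match L with
  | [] => [inr (- h)%Z]
  | (n,g) :: r => inr (n - h)%Z :: inl g :: unhs G n r
  end.
Fixpoint pre (G : IMGroup) (h : Z) (L : list (ent G)) : word G :=
  match L with
  | [] => []
  | (n,g) :: r => inr (n - h)%Z :: inl g :: pre G n r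
  end.
Fixpoint lastht (G : IMGroup) (h : Z) (L : list (ent G)) : Z :=
  match L with
  | [] => h
  | (n,g) :: r => lastht G n r
  end.

Lemma unhs_app G h u v : unhs G h (u ++ v) = pre G h u ++ unhs G (lastht G h u) v.
Proof. revert h; induction u as [|[n g] u IH]; intros h; simpl; auto. rewrite IH; auto. Qed.

Lemma we_eq G a a' b b' : a = a' -> b = b' -> word_equiv G a' b' -> word_equiv G a b.
Proof. intros -> ->; auto. Qed.

Lemma U1 G h h' L : word_equiv G (unhs G h L) (inr (h' - h)%Z :: unhs G h' L).
Proof.
  destruct L as [|[n g] r]; simpl; apply we_sym.
  - eapply we_eq; [| |apply (E_mul2 G [] [] (h' - h) (- h'))]; simpl; auto.
    f_equal. f_equal. lia.
  - eapply we_eq; [| |apply (E_mul2 G [] (inl g :: unhs G n r) (h' - h) (n - h'))]; simpl; auto.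
    f_equal. f_equal. lia.
Qed.

Lemma U2 G w h : word_equiv G (unhs G h (hs G h w)) (w ++ [inr (- (h + tsum G w))%Z]).
Proof.
  revert h; induction w as [|[g|m] r IH]; intros h; simpl.
  - replace (- (h + 0))%Z with (- h)%Z by lia. constructor.
  - replace (h - h)%Z with 0%Z by lia.
    eapply we_trans. apply (E_del0 G []). simpl. apply E_cons. apply IH.
  - destruct (Z.eq_dec m 0) as [->|Hm]; simpl.
    + replace (h - h)%Z with 0%Z by lia.
      eapply we_trans. apply (E_del0 G []). simpl.
      eapply we_trans. apply (E_dele G []). simpl.
      eapply we_trans. apply IH. apply we_sym.
      eapply we_trans. apply (E_del0 G []). simpl.
      replace (h + (0 + tsum G r))%Z with (h + tsum G r)%Z by lia. constructor.
    + eapply we_trans. apply (U1 G h (h + m)%Z).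
      replace (h + m - h)%Z with m by lia. apply E_cons.
      replace (h + (m + tsum G r))%Z with (h + m + tsum G r)%Z by lia. apply IH.
Qed.

Lemma sound G A L c : Rd G A L c -> c <= 0 -> forall h, exists L',
  Forall (fun p => AS G A (fst p) (snd p)) L' /\ word_equiv G (unhs G h L) (unhs G h L').
Proof.
  induction 1 as [L c HF|u v n x y c H IH|u v n x c H IH]; intros Hc h.
  - exists L. split; [|constructor]. apply FC_exact. eapply FC_mono; eauto.
  - destruct (IH Hc h) as [L' [HL' HE]]. exists L'. split; auto.
    eapply we_trans; [|exact HE]. rewrite !unhs_app. simpl.
    rewrite Z.sub_diag.
    eapply we_trans.
    { eapply we_eq; [| |apply (E_del0 G (pre G h u ++ [inr (n - lastht G h u)%Z; inl x]) (inl y :: unhs G n v))].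
      rewrite <- app_assoc; reflexivity. reflexivity. }
    eapply we_eq; [| |apply (E_mul1 G (pre G h u ++ [inr (n - lastht G h u)%Z]) (unhs G n v) x y)];
      repeat rewrite <- app_assoc; simpl; reflexivity.
  - pose proof (Rd_nonneg _ _ _ _ H). pose proof (d_nonneg G x (gone G)).
    assert (E : gdist G x (gone G) = 0) by lra. apply gdist_eq0 in E. subst x.
    destruct (IH ltac:(lra) h) as [L' [HL' HE]]. exists L'. split; auto.
    eapply we_trans; [|exact HE]. rewrite !unhs_app. simpl.
    eapply we_trans.
    { eapply we_eq; [| |apply (E_dele G (pre G h u ++ [inr (n - lastht G h u)%Z]) (unhs G n v))].
      rewrite <- app_assoc; reflexivity. reflexivity. }
    repeat rewrite <- app_assoc. simpl. apply E_app. apply we_sym. apply U1.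
Qed.

Definition gw (G : IMGroup) (p : ent G) : word G :=
  if Z.eq_dec (fst p) 1 then [inr 1%Z; inl (snd p); inr (-1)%Z] else [inl (snd p)].

Lemma final G A (HA : is_subgroup G A) L h : Forall (fun p => AS G A (fst p) (snd p)) L ->
  Forall (gen_word G A) (map (gw G) L) /\
  word_equiv G (unhs G h L) (inr (- h)%Z :: concat (map (gw G) L)).
Proof.
  destruct HA as [He [Hm Hi]].
  revert h; induction L as [|[n g] L IH]; intros h HF; simpl.
  - split; constructor.
  - inversion HF as [|? ? Ha HF']; subst. simpl in Ha.
    destruct (IH n HF') as [Hg HE]. split.
    + constructor; auto. unfold gw, gen_word; simpl. destruct (Z.eq_dec n 1) as [->|Hn].
      * right. exists g. split; auto. destruct Ha as [Ha|[[_ Ha]|Ha]]; [lia|auto|subst; auto].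
      * left. exists g; auto.
    + unfold gw; cbn [fst snd unhs map concat]. eapply we_trans. apply E_cons, E_cons, HE.
      destruct (Z.eq_dec n 1) as [->|Hn]; cbn [fst snd app].
      * eapply we_eq; [| |apply we_sym, (E_mul2 G [] (inl g :: inr (-1)%Z :: concat (map (gw G) L)) (-h) 1)];
          cbn [app]; [|reflexivity]. f_equal. f_equal. lia.
      * destruct Ha as [Hn0|[[E _]|Hg0]]; [subst n|congruence|subst g].
        -- eapply we_trans. apply (E_del0 G [inr (0 - h)%Z; inl g]). simpl.
           replace (0 - h)%Z with (- h)%Z by lia. constructor.
        -- eapply we_trans. apply (E_dele G [inr (n - h)%Z]). simpl.
           eapply we_trans. apply (E_mul2 G []). simpl. apply we_sym.
           eapply we_trans. apply (E_dele G [inr (- h)%Z]). simpl.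
           replace (n - h + - n)%Z with (- h)%Z by lia. constructor.
Qed.

Lemma gens G A (HA : is_subgroup G A) ws : Forall (gen_word G A) ws ->
  tsum G (concat ws) = 0%Z /\ FC G A (hs G 0 (concat ws)) 0.
Proof.
  destruct HA as [He [Hm Hi]].
  induction 1 as [|x ws Hx HF [IH1 IH2]]; simpl.
  - split; auto. constructor; lra.
  - rewrite tsum_app, hs_app.
    destruct Hx as [[g ->]|[a [Ha ->]]]; simpl.
    + split; auto. replace 0 with (0 + 0) by ring. apply (FC_app _ _ [(0%Z, g)]); auto.
      apply FC_cons with (a := g). left; auto. rewrite d_refl. constructor; lra.
    + split; [lia|]. destruct (Z.eq_dec 1 0); [lia|]. simpl.
      destruct (Z.eq_dec (-1) 0); [lia|]. simpl.
      replace 0 with (0 + 0) by ring. apply (FC_app _ _ [(1%Z, a)]); auto.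
      apply FC_cons with (a := a). right; left; auto. rewrite d_refl. constructor; lra.
Qed.

Lemma wd_cons G x y a b : word_dist G (x :: a) (y :: b) = letter_dist G x y + word_dist G a b.
Proof. reflexivity. Qed.

Lemma ld_nonneg G x y : 0 <= letter_dist G x y.
Proof.
  destruct x, y; simpl; pose proof (Rabs_pos (IZR 0)); try apply d_nonneg; try apply Rabs_pos;
  try (pose proof (d_nonneg G c (gone G)); pose proof (Rabs_pos (IZR z)); lra);
  try (pose proof (d_nonneg G (gone G) c); pose proof (Rabs_pos (IZR z)); lra).
Qed.

Lemma wd_nonneg G a b : 0 <= word_dist G a b.
Proof.
  revert b; induction a as [|x a IH]; intros [|y b]; try (unfold word_dist; simpl; lra).
  rewrite wd_cons. pose proof (ld_nonneg G x y). pose proof (IH b). lra.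
Qed.

Lemma Zabs1 z : z <> 0%Z -> 1 <= Rabs (IZR z).
Proof. intros Hz. rewrite Rabs_Zabs. apply IZR_le. lia. Qed.

Lemma aligned G a b h : length a = length b -> word_dist G a b < 1 ->
  Pert G (hs G h a) (hs G h b) (word_dist G a b) /\ tsum G a = tsum G b.
Proof.
  revert b h; induction a as [|x a IH]; intros [|y b] h Hl Hd; simpl in Hl; try discriminate.
  - split; auto. constructor. unfold word_dist; simpl; lra.
  - injection Hl as Hl. rewrite wd_cons in *. pose proof (ld_nonneg G x y) as Hx.
    pose proof (wd_nonneg G a b) as Hw.
    destruct x as [g|m], y as [g'|n]; simpl in *.
    + destruct (IH b h Hl ltac:(lra)) as [HP HS]. split; auto. constructor.
      replace (gdist G g g' + word_dist G a b - gdist G g g') with (word_dist G a b) by ring. auto.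
    + destruct (Z.eq_dec n 0) as [->|Hn].
      * destruct (IH b h Hl ltac:(lra)) as [HP HS]. split; [|lia]. constructor.
        eapply Pert_mono; eauto. pose proof (Rabs_pos (IZR 0)). lra.
      * pose proof (Zabs1 _ Hn). pose proof (d_nonneg G g (gone G)). lra.
    + destruct (Z.eq_dec m 0) as [->|Hm].
      * destruct (IH b h Hl ltac:(lra)) as [HP HS]. split; [|lia]. constructor.
        eapply Pert_mono; eauto. pose proof (Rabs_pos (IZR 0)). lra.
      * pose proof (Zabs1 _ Hm). pose proof (d_nonneg G (gone G) g'). lra.
    + destruct (Z.eq_dec m n) as [<-|Hmn].
      * destruct (Z.eq_dec m 0) as [->|Hm].
        -- destruct (IH b h Hl ltac:(lra)) as [HP HS]. split; [|lia]. constructor.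
           rewrite d_refl. eapply Pert_mono; eauto. lra.
        -- destruct (IH b (h + m)%Z Hl ltac:(lra)) as [HP HS]. split; [|lia].
           eapply Pert_mono; eauto. lra.
      * assert (m - n <> 0)%Z by lia. pose proof (Zabs1 _ H). lra.
Qed.

Theorem mainTheorem11 (G : IMGroup) (A : carrier G -> Prop) :
  is_subgroup G A -> closed_in G A -> graev_closed G (in_GtAt G A).
Proof.
  intros HA HC w Hw.
  assert (Key : forall eps, 0 < eps -> Rd G A (hs G 0 w) eps /\ tsum G w = 0%Z).
  { intros eps He.
    destruct (Hw (Rmin eps (1/2)) ltac:(apply Rmin_glb_lt; lra)) as [h [[ws [Hws Hh]] [a1 [a2 [Hl [E1 [E2 Hd]]]]]]].
    pose proof (Rmin_l eps (1/2)). pose proof (Rmin_r eps (1/2)).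
    destruct (gens _ _ HA ws Hws) as [S0 F0].
    assert (R2 : Rd G A (hs G 0 a2) 0).
    { apply (Rd_equiv _ _ HA _ _ (we_trans _ _ _ _ E2 Hh)). constructor; auto. }
    assert (S2 : tsum G a2 = 0%Z).
    { rewrite (tsum_equiv _ _ _ (we_trans _ _ _ _ E2 Hh)); auto. }
    destruct (aligned G a1 a2 0 Hl ltac:(lra)) as [HP HS].
    pose proof (Rd_pert _ _ _ _ R2 _ _ (Pert_sym _ _ _ _ HP)) as R1.
    split.
    - apply (Rd_equiv _ _ HA _ _ (we_sym _ _ _ E1)). eapply Rd_mono; eauto. lra.
    - rewrite <- (tsum_equiv _ _ _ E1). congruence. }
  assert (HR : Rd G A (hs G 0 w) 0).
  { apply Rd_closed; auto. intros eps He; apply Key; auto. }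
  destruct (Key 1 ltac:(lra)) as [_ HS].
  destruct (sound _ _ _ _ HR ltac:(lra) 0%Z) as [L' [HL' HE]].
  destruct (final _ _ HA L' 0%Z HL') as [Hg HE'].
  exists (map (gw G) L'). split; auto.
  eapply we_trans.
  { apply we_sym. eapply we_trans. apply (U2 G w 0%Z). rewrite HS.
    replace (- (0 + 0))%Z with 0%Z by lia.
    eapply we_eq; [reflexivity| symmetry; apply app_nil_r | apply (E_del0 G w [])]. }
  eapply we_trans. apply HE. eapply we_trans. apply HE'. simpl. apply (E_del0 G []).
Qed.
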